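(* Let $N\geq2$, let $|\psi\rangle\in\mathrm{Sym}_N$ be nonzero, and let $n=\lfloor N/2\rfloor+1$. Let $\rho^{(n)}=\mathrm{Tr}_{N-n}(|\psi\rangle\langle\psi|)$ be the reduced operator on the first $n$ qubits (with $\rho^{(N)}=|\psi\rangle\langle\psi|$ if $n=N$). Then there exists a nonzero $|\phi\rangle\in\mathrm{Sym}_n$ with $\rho^{(n)}|\phi\rangle=0$. Consequently, the operator $H=\sum_{i=1}^N h_i$, where $h_i$ is the orthogonal projector onto $\ker(\rho^{(n)})\cap\mathrm{Sym}_n$ acting on qubits $i,i+1,\dots,i+n-1$ (indices mod $N$), is a nonzero positive semidefinite operator with $H|\psi\rangle=0$.
   Context: The one-qubit space is $\mathbb{C}^2$. $\mathrm{Sym}_n\subset(\mathbb{C}^2)^{\otimes n}$ denotes the symmetric subspace (vectors invariant under all permutations of the tensor factors), of dimension $n+1$. *)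

(* Defs.v *)
(* Scalars: an arbitrary numClosedFieldType C (e.g. algC),
   the MathComp abstraction of the complex numbers with conjugation. *)
From HB Require Import structures.
From mathcomp Require Import all_boot all_order all_algebra all_fingroup.
Set Implicit Arguments. Unset Strict Implicit. Unset Printing Implicit Defensive.
Import Order.TTheory GRing.Theory Num.Theory.
Local Open Scope ring_scope.

(* Computational basis of (C^2)^{⊗n}: bit strings of length n;
   qubit k (0-based) is the k-th entry. *)
Definition bits (n : nat) := (n.-tuple bool).

Section Qubits.
Variable C : numClosedFieldType.

(* vectors of (C^2)^{⊗n} and operators on it (matrix entries in the
   computational basis) *)
Definition vec (n : nat) := bits n -> C.
Definition op (n : nat) := bits n -> bits n -> C.

Definition nonzero_vec n (v : vec n) : Prop := exists x, v x != 0.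
Definition nonzero_op n (A : op n) : Prop := exists x y, A x y != 0.

Definition permute_bits n (s : 'S_n) (x : bits n) : bits n :=
  [tuple tnth x (s i) | i < n].

Definition sym_state n (v : vec n) : Prop :=
  forall (s : 'S_n) (x : bits n), v (permute_bits s x) = v x.

Definition apply n (A : op n) (v : vec n) : vec n :=
  fun x => \sum_(y : bits n) A x y * v y.

Definition outer n (v : vec n) : op n := fun x y => v x * (v y)^*.

Definition glue N n m (x : bits n) (z : bits m) : bits N :=
  [tuple nth false (tval x ++ tval z) i | i < N].

Definition ptrace N n (A : op N) : op n :=
  fun x y => \sum_(z : bits (N - n)) A (glue N x z) (glue N y z).

Definition reduced N n (psi : vec N) : op n := @ptrace N n (outer psi).

Definition kerSym n (rho : op n) (v : vec n) : Prop :=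
  sym_state v /\ forall x, apply rho v x = 0.

Definition is_orth_proj n (P : op n) (S : vec n -> Prop) : Prop :=
  [/\ (forall x y, \sum_(z : bits n) P x z * P z y = P x y),
      (forall x y, P x y = (P y x)^*)
    & (forall v, S v <-> (forall x, apply P v x = v x))].

Definition psd n (A : op n) : Prop :=
  forall v : vec n, 0 <= \sum_(x : bits n) \sum_(y : bits n) (v x)^* * A x y * v y.

Definition in_window N n (i j : 'I_N) : bool :=
  [exists k : 'I_n, (j : nat) == ((i + k) %% N)%N].

Definition restr N n (i : 'I_N) (x : bits N) : bits n :=
  [tuple nth false (tval x) ((i + k) %% N)%N | k < n].

Definition embed N n (i : 'I_N) (h : op n) : op N :=
  fun x y =>
    if [forall j : 'I_N, ~~ @in_window N n i j ==> (tnth x j == tnth y j)]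
    then h (@restr N n i x) (@restr N n i y) else 0.

Definition local_sum N n (h : op n) : op N :=
  fun x y => \sum_(i < N) embed i h x y.

End Qubits.

Arguments reduced {C N} n psi _ _.
Arguments local_sum {C} N {n} h _ _.

(* Main.v *)
Require Import Defs.
From HB Require Import structures.
From mathcomp Require Import all_boot all_order all_algebra all_fingroup.
From mathcomp Require Import zify ring.
Import Order.TTheory GRing.Theory Num.Theory.
Local Open Scope ring_scope.
Set Implicit Arguments. Unset Strict Implicit. Unset Printing Implicit Defensive.

Lemma count_permute_bits n (s : 'S_n) (x : bits n) :
  count id (permute_bits s x) = count id x.
Proof.
have: perm_eq (permute_bits s x) x by apply/tuple_permP; exists s.
by move/seq.permP=> /(_ id).
Qed.

Lemma perm_eq_bool (s1 s2 : seq bool) : size s1 = size s2 ->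
  count id s1 = count id s2 -> perm_eq s1 s2.
Proof.
move=> hs hc; apply/seq.permP => a.
have hn : forall s : seq bool, count negb s = (size s - count id s)%N.
  by move=> s; rewrite -(count_predC id s) addKn.
case at_: (a true); case af: (a false).
- by rewrite !(@eq_count _ a predT) ?count_predT // => -[].
- by rewrite !(@eq_count _ a id) // => -[].
- by rewrite !(@eq_count _ a negb) ?hn ?hs ?hc // => -[].
- by rewrite !(@eq_count _ a pred0) ?count_pred0 // => -[].
Qed.

Lemma sym_count (C : numClosedFieldType) n (v : vec C n) : sym_state v ->
  forall x y : bits n, count id x = count id y -> v x = v y.
Proof.
move=> hv x y hc.
have: perm_eq y x by apply: perm_eq_bool; rewrite ?size_tuple.
case/tuple_permP=> p hp.
have -> : y = permute_bits p x by apply: val_inj; rewrite /= hp.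
by rewrite hv.
Qed.

Lemma mod_cases N a : (a < N + N)%N -> (a %% N = if a < N then a else a - N)%N.
Proof.
move=> h; case: ltnP => h2; first by rewrite modn_small.
rewrite {1}(_ : a = a - N + N)%N; last by lia.
by rewrite modnDr modn_small //; lia.
Qed.

Definition idx N (i : 'I_N) (j : nat) := ((j + (N - i)) %% N)%N.

Lemma idx_rot N (i : 'I_N) k : (k < N)%N -> idx i ((i + k) %% N) = k.
Proof.
move=> hk; have hi := ltn_ord i; rewrite /idx (mod_cases (a := (i + k)%N)); last by lia.
case: ltnP => h1; rewrite mod_cases; (try case: ltnP); lia.
Qed.

Lemma rot_idx N (i : 'I_N) j : (j < N)%N -> ((i + idx i j) %% N = j)%N.
Proof.
move=> hj; have hi := ltn_ord i; rewrite /idx (mod_cases (a := (j + (N - i))%N)); last by lia.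
case: ltnP => h1; rewrite mod_cases; (try case: ltnP); lia.
Qed.

Lemma idx_lt N (i : 'I_N) j : (idx i j < N)%N.
Proof. by rewrite /idx ltn_pmod //; case: N i => [[]|]. Qed.

Lemma rot_lt N (i : 'I_N) k : ((i + k) %% N < N)%N.
Proof. by rewrite ltn_pmod //; case: N i => [[]|]. Qed.

Lemma in_windowE N n (i j : 'I_N) : (n <= N)%N -> in_window n i j = (idx i j < n)%N.
Proof.
move=> hn; apply/existsP/idP => [[k /eqP ->]|h].
  by rewrite idx_rot //; have := ltn_ord k; lia.
by exists (Ordinal h); rewrite /= rot_idx.
Qed.

Lemma key_form_ge0 (C : numClosedFieldType) (T K : finType) (key : T -> K) (g : T -> C) :
  0 <= \sum_x \sum_y (if key x == key y then (g x)^* * g y else 0).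
Proof.
pose G k := \sum_(x | key x == k) g x.
have -> : \sum_x \sum_y (if key x == key y then (g x)^* * g y else 0)
          = \sum_k (G k)^* * G k.
  have -> : \sum_x \sum_y (if key x == key y then (g x)^* * g y else 0)
            = \sum_x (g x)^* * G (key x).
    apply: eq_bigr => x _; rewrite /G mulr_sumr [RHS]big_mkcond /=.
    by apply: eq_bigr => y _; rewrite eq_sym; case: eqP.
  rewrite (partition_big key predT) //=; apply: eq_bigr => k _.
  rewrite /G rmorph_sum mulr_suml /=; apply: eq_bigr => x /eqP <-.
  by [].
by apply: sumr_ge0 => k _; rewrite mulrC mul_conjC_ge0.
Qed.
Lemma sum_enum (C : numClosedFieldType) (T : finType) (F : T -> C) :
  \sum_(y : T) F y = \sum_(i < #|T|) F (enum_val i).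
Proof. by rewrite -big_enum_val. Qed.

Lemma orth_proj_exists (C : numClosedFieldType) (T I : finType) (L : I -> T -> C) :
  exists P : T -> T -> C,
   [/\ forall x y, \sum_z P x z * P z y = P x y,
       forall x y, P x y = (P y x)^*
     & forall v : T -> C, (forall t, \sum_y L t y * v y = 0) <->
                          (forall x, \sum_y P x y * v y = v x)].
Proof.
pose d := #|T|.
pose vrow (v : T -> C) : 'rV[C]_d := \row_i v (enum_val i).
pose K : 'M[C]_(d, #|I|) := \matrix_(i, j) L (enum_val j) (enum_val i).
pose B := schmidt (row_base (kermx K)).
have hB : B *m (B ^t* )%sesqui = 1%:M.
  by apply/unitarymxP; apply: schmidt_unitarymx; exact: rank_leq_col.
have spanB : forall w : 'rV_d, (w <= B)%MS = (w <= kermx K)%MS.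
  by move=> w; rewrite /B (eqmx_schmidt_free (row_base_free _)) eq_row_base.
pose P := ((B ^t* )%sesqui *m B).
have PP : P *m P = P by rewrite /P mulmxA -(mulmxA _ B) hB mulmx1.
have fixP : forall w : 'rV_d, (w *m P == w) = (w <= kermx K)%MS.
  move=> w; rewrite -spanB; apply/eqP/idP => [<-|/submxP[D ->]].
    by rewrite /P mulmxA submxMl.
  by rewrite /P mulmxA -(mulmxA D) hB mulmx1.
exists (fun x y => P (enum_rank y) (enum_rank x)); split.
- move=> x y; transitivity ((P *m P) (enum_rank y) (enum_rank x)); last by rewrite PP.
  rewrite mxE (sum_enum (fun z => _)).
  by apply: eq_bigr => i _; rewrite enum_valK mulrC.
- move=> x y; rewrite !mxE rmorph_sum; apply: eq_bigr => k _.
  by rewrite !mxE rmorphM /= mulrC; congr (_ * _); rewrite conjCK.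
- move=> v.
  have e1 : forall t, \sum_y L t y * v y = (vrow v *m K) 0 (enum_rank t).
    move=> t; rewrite mxE sum_enum; apply: eq_bigr => i _.
    by rewrite !mxE enum_rankK mulrC.
  have e2 : forall x, \sum_y P (enum_rank y) (enum_rank x) * v y
                      = (vrow v *m P) 0 (enum_rank x).
    move=> x; rewrite mxE sum_enum; apply: eq_bigr => i _.
    by rewrite !mxE enum_valK mulrC.
  split => [h x|h t].
  + rewrite e2.
    have /eqP -> : vrow v *m P == vrow v.
      rewrite fixP sub_kermx; apply/eqP/rowP => j.
      by rewrite -(enum_valK j) -e1 h mxE.
    by rewrite /vrow mxE enum_rankK.
  + have : vrow v *m P == vrow v.
      apply/eqP/rowP => j; rewrite -(enum_valK j) -e2 h /vrow mxE enum_rankK.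
      by [].  
    rewrite fixP sub_kermx => /eqP hK.
    by rewrite e1 hK mxE.
Qed.

Lemma sum_delta (C : numClosedFieldType) (T : finType) (a : T) (v : T -> C) :
  \sum_y (y == a)%:R * v y = v a.
Proof.
rewrite (bigD1 a) //= eqxx mul1r big1 ?addr0 // => y /negbTE ->.
by rewrite mul0r.
Qed.

Lemma proj_kerSym (C : numClosedFieldType) n (rho : op C n) :
  exists h, is_orth_proj h (kerSym rho).
Proof.
pose L (t : ({perm 'I_n} * bits n + bits n)%type) (y : bits n) : C :=
  match t with
  | inl (s, x) => (y == permute_bits s x)%:R - (y == x)%:R
  | inr x => rho x y end.
have [P [h1 h2 h3]] := orth_proj_exists L.
exists P; split => // v; rewrite -h3; split.
- move=> [hs hr] [[s x]|x] /=.
    by rewrite (eq_bigr (fun y => (y == permute_bits s x)%:R * v y - (y == x)%:R * v y))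
       ?sumrB ?sum_delta ?hs ?subrr // => y _; rewrite mulrBl.
  exact: hr.
- move=> h; split.
    move=> s x; apply/eqP; rewrite -subr_eq0; apply/eqP.
    have := h (inl (s, x)); rewrite /= (eq_bigr (fun y => (y == permute_bits s x)%:R * v y - (y == x)%:R * v y)).
      by rewrite sumrB !sum_delta.
    by move=> y _; rewrite mulrBl.
  by move=> x; exact: (h (inr x)).
Qed.

Lemma nth_mk (T : Type) N (f : 'I_N -> T) d k (hk : (k < N)%N) :
  nth d [tuple f j | j < N] k = f (Ordinal hk).
Proof. by rewrite (nth_mktuple _ _ (Ordinal hk)). Qed.

Lemma glue_val N n m (w : bits n) (z : bits m) : (n + m = N)%N ->
  tval (glue N w z) = tval w ++ tval z.
Proof.
move=> hN; apply: (@eq_from_nth _ false).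
  by rewrite size_cat !size_tuple.
move=> k; rewrite size_tuple => hk; by rewrite /glue (nth_mk _ _ hk).
Qed.

Lemma count_glue N n (w : bits n) (z : bits (N - n)) : (n <= N)%N ->
  count id (glue N w z) = (count id w + count id z)%N.
Proof. by move=> h; rewrite glue_val ?count_cat //; lia. Qed.

Definition ctup n j : bits n := [tuple (i < j)%N | i < n].

Lemma count_ctup n j : (j <= n)%N -> count id (ctup n j) = j.
Proof.
move=> hj; rewrite /ctup /= count_map.
rewrite (eq_count (a2 := (fun i => i < j)%N \o val)) // -count_map val_enum_ord.
rewrite (_ : n = j + (n - j))%N; last by lia.
rewrite iotaD count_cat add0n.
rewrite (eq_in_count (a2 := predT)); last by move=> i; rewrite mem_iota /=; lia.
rewrite count_predT size_iota (eq_in_count (a2 := pred0)) ?count_pred0 ?addn0 //.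
by move=> i; rewrite mem_iota /=; lia.
Qed.

Lemma reducedE (C : numClosedFieldType) N n (psi : vec C N) x y :
  reduced n psi x y = \sum_(z : bits (N - n)) psi (glue N x z) * (psi (glue N y z))^*.
Proof. by []. Qed.

Lemma part1 (C : numClosedFieldType) N n (psi : vec C N) :
  sym_state psi -> (n <= N)%N -> (N - n < n)%N ->
  exists phi : vec C n, nonzero_vec phi /\ sym_state phi /\
     forall x, apply (reduced n psi) phi x = 0.
Proof.
move=> hpsi hnN hlt.
pose m := (N - n)%N.
pose M : 'M[C]_(n.+1, m.+1) := \matrix_(j, k)
   \sum_(y : bits n | inord (count id y) == j) (psi (glue N y (ctup m k)))^*.
have [i hi] : exists i, row i (kermx M) != 0.
  case: (pickP (fun i => row i (kermx M) != 0)) => [i hi|h]; first by exists i.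
  have K0 : kermx M = 0.
    by apply/row_matrixP => i; rewrite row0; apply/eqP; have := h i => /= /negbFE.
  have := mxrank_ker M; rewrite K0 mxrank0 => /esym /eqP; rewrite subn_eq0.
  move=> h1; exfalso; have := rank_leq_col M; have hm : m = (N - n)%N by []; lia.
pose f := row i (kermx M).
have fM : f *m M = 0 by rewrite /f -row_mul mulmx_ker row0.
have [j hj] : exists j, f 0 j != 0.
  case: (pickP (fun j => f 0 j != 0)) => [j hj|h]; first by exists j.
  move: hi; rewrite -/f => /eqP []; apply/rowP => k.
  by have := h k => /= /negbFE /eqP; rewrite /f !mxE => ->.
pose phi (y : bits n) := f 0 (inord (count id y)).
exists phi; split; last split.
- exists (ctup n j); rewrite /phi count_ctup; last by have := ltn_ord j.
  by rewrite inord_val.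
- by move=> s x; rewrite /phi count_permute_bits.
- move=> x; rewrite /apply.
  under eq_bigr do rewrite reducedE mulr_suml.
  rewrite exchange_big /= big1 // => z _.
  under eq_bigr do rewrite -mulrA.
  rewrite -mulr_sumr.
  have hz : (count id z <= m)%N by have := count_size id z; rewrite size_tuple.
  pose k : 'I_m.+1 := inord (count id z).
  rewrite (_ : \sum_y _ = (f *m M) 0 k); first by rewrite fM mxE mulr0.
  have ME : forall a b, M a b = \sum_(y : bits n | inord (count id y) == a) (psi (glue N y (ctup m b)))^* by move=> a b; rewrite mxE.
  rewrite mxE; under [RHS]eq_bigr do rewrite ME mulr_sumr.
  rewrite (partition_big (fun y : bits n => (inord (count id y) : 'I_n.+1)) predT) //=.
  apply: eq_bigr => l _; apply: eq_bigr => y /eqP hy.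
  rewrite /phi hy mulrC; congr (_ * _); congr (Num.conj _).
  apply: sym_count => //; rewrite !count_glue // count_ctup.
    by rewrite inordK.
  by rewrite inordK; lia.
Qed.

Section Window.
Variables (N n : nat) (i : 'I_N).
Hypothesis hnN : (n <= N)%N.

Definition key (x : bits N) : {ffun 'I_N -> bool} :=
  [ffun j => ~~ in_window n i j && tnth x j].

Lemma agree_key (x y : bits N) :
  [forall j : 'I_N, ~~ in_window n i j ==> (tnth x j == tnth y j)] = (key x == key y).
Proof.
apply/forallP/eqP => [h|h j].
  apply/ffunP => j; rewrite !ffunE; have := h j.
  by case: (in_window n i j) => //= /eqP ->.
have := congr1 (fun f : {ffun 'I_N -> bool} => f j) h; rewrite !ffunE.
by case: (in_window n i j) => //= ->.
Qed.

Definition ins (x : bits N) (w : bits n) : bits N :=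
  [tuple if in_window n i j then nth false w (idx i j) else tnth x j | j < N].

Lemma key_ins x w : key (ins x w) = key x.
Proof.
apply/ffunP => j; rewrite !ffunE tnth_mktuple.
by case: (in_window n i j).
Qed.

Lemma nth_tup (y : bits N) a (ha : (a < N)%N) : nth false y a = tnth y (Ordinal ha).
Proof. by rewrite (tnth_nth false). Qed.

Lemma restr_ins x w : restr n i (ins x w) = w.
Proof.
apply: eq_from_tnth => k; rewrite tnth_mktuple (nth_tup _ (rot_lt i k)) tnth_mktuple.
rewrite in_windowE //= idx_rot; last by have := ltn_ord k; lia.
by rewrite ltn_ord (tnth_nth false).
Qed.

Lemma ins_restr x y : key y = key x -> ins x (restr n i y) = y.
Proof.
move=> hk; apply: eq_from_tnth => j; rewrite tnth_mktuple.
case: ifP => hw.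
  move: (hw); rewrite in_windowE // => hl.
  rewrite (nth_mk _ _ hl) /= (nth_tup _ (rot_lt i _)); congr tnth.
  by apply: val_inj; rewrite /= rot_idx.
have := congr1 (fun f : {ffun 'I_N -> bool} => f j) hk; rewrite !ffunE hw /= => ->.
by [].
Qed.

Lemma sum_fiber (C : numClosedFieldType) (x : bits N) (F : bits N -> C) :
  \sum_(y | key y == key x) F y = \sum_(w : bits n) F (ins x w).
Proof.
rewrite (reindex_onto (ins x) (restr n i)); last by move=> y /eqP; exact: ins_restr.
apply: eq_bigl => w; by rewrite key_ins restr_ins !eqxx.
Qed.

Definition rotf (j : 'I_N) : 'I_N := Ordinal (rot_lt i j).

Lemma rotf_inj : injective rotf.
Proof.
move=> a b /(congr1 val) /= h; apply: val_inj.
by have := congr1 (idx i) h; rewrite !idx_rot.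
Qed.

Definition rotp : {perm 'I_N} := perm rotf_inj.

Definition zx (x : bits N) : bits (N - n) :=
  [tuple nth false x ((i + (n + l)) %% N) | l < N - n].

Lemma rot_ins x w : permute_bits rotp (ins x w) = glue N w (zx x).
Proof.
apply: eq_from_tnth => j; rewrite tnth_mktuple permE tnth_mktuple /=.
rewrite in_windowE //= idx_rot //.
rewrite /glue tnth_mktuple nth_cat size_tuple.
case: ltnP => hj.
  by [].
have hl : (j - n < N - n)%N by have := ltn_ord j; lia.
rewrite (nth_mk _ _ hl) /= (nth_tup _ (rot_lt i _)); congr tnth.
by apply: val_inj => /=; congr (_ %% _)%N; lia.
Qed.

End Window.

Lemma ker_orth (C : numClosedFieldType) N n (psi : vec C N) (u : vec C n) :
  (forall x, apply (reduced n psi) u x = 0) ->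
  forall z : bits (N - n), \sum_w (u w)^* * psi (glue N w z) = 0.
Proof.
move=> hu.
pose a (z : bits (N - n)) := \sum_y (psi (glue N y z))^* * u y.
have ca : forall z, \sum_w (u w)^* * psi (glue N w z) = (a z)^*.
  move=> z; rewrite rmorph_sum; apply: eq_bigr => w _.
  by rewrite rmorphM mulrC; congr (_ * _); exact: (esym (conjCK _)).
have hr : forall x, apply (reduced n psi) u x = \sum_z psi (glue N x z) * a z.
  move=> x; rewrite /apply; under eq_bigr do rewrite reducedE mulr_suml.
  rewrite exchange_big; apply: eq_bigr => z _; rewrite mulr_sumr.
  by apply: eq_bigr => y _; rewrite mulrA.
have h0 : \sum_z (a z)^* * a z = 0.
  transitivity (\sum_x (u x)^* * apply (reduced n psi) u x).
    under [RHS]eq_bigr do rewrite hr mulr_sumr.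
    rewrite exchange_big; apply: eq_bigr => z _.
    by rewrite -ca mulr_suml; apply: eq_bigr => x _; rewrite mulrA.
  by rewrite big1 // => x _; rewrite hu mulr0.
move=> z; rewrite ca.
have nn : forall y, predT y -> 0 <= (a y)^* * a y.
  by move=> y _; rewrite mulrC mul_conjC_ge0.
have := psumr_eq0P nn h0 (i := z) isT.
rewrite mulrC => /eqP; rewrite mul_conjC_eq0 => /eqP ->.
by rewrite conjC0.
Qed.

Lemma embedE (C : numClosedFieldType) N n (i : 'I_N) (h : op C n) x y :
  embed i h x y = if key n i x == key n i y then h (restr n i x) (restr n i y) else 0.
Proof. by rewrite /embed agree_key. Qed.

Lemma psd_embed (C : numClosedFieldType) N n (i : 'I_N) (h : op C n) (v : vec C N) :
  (forall a b, h a b = \sum_c (h c a)^* * h c b) ->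
  0 <= \sum_x \sum_y (v x)^* * embed i h x y * v y.
Proof.
move=> hP.
pose g c x := h c (restr n i x) * v x.
have -> : \sum_x \sum_y (v x)^* * embed i h x y * v y =
   \sum_c \sum_x \sum_y (if key n i x == key n i y then (g c x)^* * g c y else 0).
  transitivity (\sum_x \sum_y \sum_c
      (if key n i x == key n i y then (g c x)^* * g c y else 0)).
    apply: eq_bigr => x _; apply: eq_bigr => y _; rewrite embedE.
    case: eqP => _; last by rewrite mulr0 mul0r big1.
    rewrite hP mulr_sumr mulr_suml; apply: eq_bigr => c _.
    by rewrite /g rmorphM; ring.
  under eq_bigr do rewrite exchange_big /=.
  by rewrite exchange_big.
by apply: sumr_ge0 => c _; exact: key_form_ge0.
Qed.

Lemma embed_psi (C : numClosedFieldType) N n (i : 'I_N) (h : op C n) (psi : vec C N) :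
  (n <= N)%N -> sym_state psi ->
  (forall a (z : bits (N - n)), \sum_w (h w a)^* * psi (glue N w z) = 0) ->
  (forall a b, h a b = (h b a)^*) ->
  forall x, \sum_y embed i h x y * psi y = 0.
Proof.
move=> hnN hpsi horth hH x.
transitivity (\sum_(y | key n i y == key n i x) h (restr n i x) (restr n i y) * psi y).
  rewrite [RHS]big_mkcond /=; apply: eq_bigr => y _; rewrite embedE eq_sym.
  by case: eqP => //; rewrite mul0r.
rewrite (sum_fiber i hnN).
transitivity (\sum_w (h w (restr n i x))^* * psi (glue N w (zx n i x))); last exact: horth.
apply: eq_bigr => w _; rewrite restr_ins // hH; congr (_ * _).
by rewrite -(hpsi (rotp i)) rot_ins.
Qed.

Lemma diag_ge0 (C : numClosedFieldType) n (h : op C n) :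
  (forall a b, h a b = \sum_c (h c a)^* * h c b) -> forall a, 0 <= h a a.
Proof. by move=> hP a; rewrite hP; apply: sumr_ge0 => c _; rewrite mulrC mul_conjC_ge0. Qed.

Lemma nonzero_local (C : numClosedFieldType) N n (h : op C n) :
  (0 < N)%N -> (n <= N)%N ->
  (forall a b, h a b = \sum_c (h c a)^* * h c b) -> (exists a b, h a b != 0) ->
  nonzero_op (local_sum N h).
Proof.
move=> hN0 hnN hP [a0 [b0 hab]].
have hbb : h b0 b0 != 0.
  apply/negP => /eqP h0; move: h0; rewrite hP => h0.
  have nn : forall c, predT c -> 0 <= (h c b0)^* * h c b0.
    by move=> c _; rewrite mulrC mul_conjC_ge0.
  have := psumr_eq0P nn h0 (i := a0) isT.
  by rewrite mulrC => /eqP; rewrite mul_conjC_eq0 (negbTE hab).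
pose x : bits N := [tuple if (j < n)%N then nth false b0 j else false | j < N].
pose i0 : 'I_N := Ordinal hN0.
have hr : restr n i0 x = b0.
  apply: eq_from_tnth => k; rewrite tnth_mktuple /= add0n.
  have hk : (k < N)%N by have := ltn_ord k; lia.
  rewrite modn_small // (nth_mk _ _ hk) /= ltn_ord.
  by rewrite (tnth_nth false).
exists x, x; rewrite /local_sum.
under eq_bigr do rewrite embedE eqxx.
apply/eqP => hs.
have nn : forall i : 'I_N, predT i -> 0 <= h (restr n i x) (restr n i x).
  by move=> i _; exact: diag_ge0.
have := psumr_eq0P nn hs (i := i0) isT.
by rewrite hr; apply/eqP.
Qed.

Theorem mainTheorem9 (C : numClosedFieldType) (N : nat) (psi : vec C N) :
  (2 <= N)%N -> sym_state psi -> nonzero_vec psi ->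
  (exists phi : vec C (N./2).+1,
      nonzero_vec phi /\ sym_state phi /\
      forall x, apply (reduced (N./2).+1 psi) phi x = 0) /\
  (exists h : op C (N./2).+1,
      is_orth_proj h (kerSym (reduced (N./2).+1 psi))) /\
  (forall h : op C (N./2).+1,
      is_orth_proj h (kerSym (reduced (N./2).+1 psi)) ->
      nonzero_op (local_sum N h) /\ psd (local_sum N h) /\
      forall x, apply (local_sum N h) psi x = 0).
Proof.
move=> hN hpsi _.
have hnN : ((N./2).+1 <= N)%N.
  have := odd_double_half N; rewrite -muln2; case: (odd N) => /=; lia.
have hlt : (N - (N./2).+1 < (N./2).+1)%N.
  have := odd_double_half N; rewrite -muln2; case: (odd N) => /=; lia.
have [phi [phi0 [phis phik]]] := part1 hpsi hnN hlt.
split; first by exists phi.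
split; first exact: proj_kerSym.
move=> h [h1 h2 h3].
have hP : forall a b, h a b = \sum_c (h c a)^* * h c b.
  by move=> a b; rewrite -h1; apply: eq_bigr => c _; rewrite h2.
have horth : forall a (z : bits (N - (N./2).+1)),
    \sum_w (h w a)^* * psi (glue N w z) = 0.
  move=> a; apply: ker_orth.
  have : kerSym (reduced (N./2).+1 psi) (fun w => h w a).
    by apply/h3 => x; rewrite /apply h1.
  by case.
split; last split.
- apply: nonzero_local => //; first by lia.
  have : forall x, apply h phi x = phi x by apply/h3.
  case: phi0 => x0 hx0 /(_ x0) hx.
  exists x0; apply/existsP; apply/negP => /existsP hne.
  move: hx0; rewrite -hx /apply big1 ?eqxx // => y _.
  suff -> : h x0 y = 0 by rewrite mul0r.
  by apply/eqP; apply/negPn/negP => hy; apply: hne; exists y.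
- move=> v; rewrite /local_sum.
  have -> : \sum_x \sum_y (v x)^* * (\sum_(i < N) embed i h x y) * v y
      = \sum_(i < N) \sum_x \sum_y (v x)^* * embed i h x y * v y.
    symmetry; rewrite exchange_big /=; apply: eq_bigr => x _.
    rewrite exchange_big /=; apply: eq_bigr => y _.
    by rewrite mulr_sumr mulr_suml.
  by apply: sumr_ge0 => i _; apply: psd_embed.
- move=> x; rewrite /apply /local_sum.
  under eq_bigr do rewrite mulr_suml.
  rewrite exchange_big big1 // => i _.
  exact: embed_psi.
Qed.
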